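(* Let $\boldsymbol{\xi}^1,\dots,\boldsymbol{\xi}^K\in\mathcal X=[0,1/\sqrt{D}]^D$, $\beta>0$, and $E(\mathbf{x}) = -\frac{1}{\beta}\log\Big(\sum_{\mu=1}^K \exp\big(-\tfrac{\beta}{2}\|\boldsymbol{\xi}^\mu-\mathbf{x}\|_2^2\big)\Big).$ Then for all $\mathbf{x},\mathbf{z}\in\mathcal X$, $\|\nabla_{\mathbf{x}}E(\mathbf{x})-\nabla_{\mathbf{x}}E(\mathbf{z})\|_2\le(1+2K\beta e^{\beta/2})\|\mathbf{x}-\mathbf{z}\|_2.$
   Context: Here $\nabla_{\mathbf{x}}E(\mathbf{x}) = \mathbf{x}-\sum_{\mu=1}^K \frac{\exp(-\frac{\beta}{2}\|\mathbf{x}-\boldsymbol{\xi}^\mu\|_2^2)}{\sum_{\nu=1}^K\exp(-\frac{\beta}{2}\|\mathbf{x}-\boldsymbol{\xi}^\nu\|_2^2)}\boldsymbol{\xi}^\mu$ is the gradient of $E$. *)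

(* Defs.v *)
From mathcomp Require Import all_boot all_order all_algebra.
From mathcomp Require Import all_classical all_reals all_analysis.
Set Implicit Arguments. Unset Strict Implicit. Unset Printing Implicit Defensive.
Import Order.TTheory GRing.Theory Num.Theory.
Local Open Scope ring_scope.

Section Hopfield.
Variables (R : realType) (D K : nat).

Definition norm2 (v : 'rV[R]_D) : R := Num.sqrt (\sum_(i < D) v 0 i ^+ 2).

Definition inX (x : 'rV[R]_D) : Prop :=
  forall i : 'I_D, 0 <= x 0 i <= 1 / Num.sqrt (D%:R).

Definition energy (xi : 'I_K -> 'rV[R]_D) (beta : R) (x : 'rV[R]_D) : R :=
  - beta^-1 * ln (\sum_(mu < K) expR (- (beta / 2) * norm2 (xi mu - x) ^+ 2)).

(* its gradient, as given explicitly in the paper: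
   x - sum_mu softmax_mu(-beta/2 ||x - xi^nu||^2) xi^mu *)
Definition gradE (xi : 'I_K -> 'rV[R]_D) (beta : R) (x : 'rV[R]_D) : 'rV[R]_D :=
  x - \sum_(mu < K)
        (expR (- (beta / 2) * norm2 (x - xi mu) ^+ 2)
         / \sum_(nu < K) expR (- (beta / 2) * norm2 (x - xi nu) ^+ 2)) *: xi mu.

End Hopfield.

(* Main.v *)
Require Import Defs.
From mathcomp Require Import all_boot all_order all_algebra.
From mathcomp Require Import all_classical all_reals all_analysis.
From mathcomp Require Import ring lra.
Import Order.TTheory GRing.Theory Num.Theory.
Local Open Scope ring_scope.

Section N.
Variables (R : realType) (n : nat).
Implicit Types u v : 'rV[R]_n.

Lemma sumsq_ge0 u : 0 <= \sum_(i < n) u 0 i ^+ 2.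
Proof. by apply: sumr_ge0 => i _; rewrite sqr_ge0. Qed.

Lemma norm2_ge0 u : 0 <= norm2 u.
Proof. exact: sqrtr_ge0. Qed.

Lemma norm2_sq u : norm2 u ^+ 2 = \sum_(i < n) u 0 i ^+ 2.
Proof. by rewrite /norm2 sqr_sqrtr // sumsq_ge0. Qed.

Lemma lagrange u v :
  (\sum_(i < n) u 0 i * v 0 i) ^+ 2 <=
  (\sum_(i < n) u 0 i ^+ 2) * (\sum_(i < n) v 0 i ^+ 2).
Proof.
set S := \sum_(i < n) u 0 i ^+ 2; set T := \sum_(i < n) v 0 i ^+ 2.
set P := \sum_(i < n) u 0 i * v 0 i.
have H0 : 0 <= \sum_(i < n) \sum_(j < n) (u 0 i * v 0 j - u 0 j * v 0 i) ^+ 2.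
  by apply: sumr_ge0 => i _; apply: sumr_ge0 => j _; rewrite sqr_ge0.
have E : forall i, \sum_(j < n) (u 0 i * v 0 j - u 0 j * v 0 i) ^+ 2
   = u 0 i ^+ 2 * T + v 0 i ^+ 2 * S - 2 * (u 0 i * v 0 i) * P.
  move=> i.
  have E1 : forall j, (u 0 i * v 0 j - u 0 j * v 0 i) ^+ 2 =
    u 0 i ^+ 2 * v 0 j ^+ 2 + v 0 i ^+ 2 * u 0 j ^+ 2 - 2 * (u 0 i * v 0 i) * (u 0 j * v 0 j).
    by move=> j; ring.
  under eq_bigr => j _ do rewrite E1.
  by rewrite sumrB big_split /= -!mulr_sumr.
move: H0; under eq_bigr => i _ do rewrite E.
rewrite sumrB big_split /= -!mulr_suml -/S -/T -/P.
rewrite -mulr_sumr -/P => H; nra.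
Qed.

Lemma cs u v : \sum_(i < n) u 0 i * v 0 i <= norm2 u * norm2 v.
Proof.
rewrite /norm2 -sqrtrM ?sumsq_ge0 //.
apply: (le_trans (ler_norm _)).
by rewrite -sqrtr_sqr ler_sqrt ?lagrange // mulr_ge0 // sumsq_ge0.
Qed.

Lemma norm2_triangle u v : norm2 (u + v) <= norm2 u + norm2 v.
Proof.
rewrite {1}/norm2 -(ger0_norm (addr_ge0 (norm2_ge0 u) (norm2_ge0 v))) -sqrtr_sqr.
rewrite ler_sqrt ?sqr_ge0 //.
have E : \sum_(i < n) (u + v) 0 i ^+ 2 =
  \sum_(i < n) u 0 i ^+ 2 + \sum_(i < n) v 0 i ^+ 2 + 2 * \sum_(i < n) u 0 i * v 0 i.
  rewrite mulr_sumr -!big_split /=; apply: eq_bigr => i _; rewrite !mxE; ring.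
rewrite E -!norm2_sq; have := cs u v; nra.
Qed.

Lemma norm2_scale (c : R) v : norm2 (c *: v) = `|c| * norm2 v.
Proof.
rewrite /norm2 -sqrtr_sqr -sqrtrM ?sqr_ge0 // mulr_sumr.
by congr Num.sqrt; apply: eq_bigr => i _; rewrite !mxE; ring.
Qed.

Lemma norm2_opp v : norm2 (- v) = norm2 v.
Proof. by rewrite -scaleN1r norm2_scale normrN normr1 mul1r. Qed.

Lemma norm2_sum (K : nat) (F : 'I_K -> 'rV[R]_n) :
  norm2 (\sum_(k < K) F k) <= \sum_(k < K) norm2 (F k).
Proof.
elim/big_rec2: _ => [|k y1 y2 _ H].
  rewrite /norm2 big1 ?sqrtr0 // => i _; rewrite mxE expr0n.
  done.
by apply: (le_trans (norm2_triangle _ _)); rewrite lerD2l.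
Qed.

End N.
Arguments norm2_ge0 {R n}.
Arguments norm2_triangle {R n}.
Arguments norm2_sum {R n K}.
Arguments norm2_scale {R n}.
Arguments norm2_opp {R n}.

Lemma helper (V : zmodType) (a b c d : V) : a - c - (b - d) = a - b - (c - d).
Proof. by rewrite !opprD !opprK addrACA. Qed.
Section M.
Variable R : realType.

Lemma expR_lip (s t : R) : s <= 0 -> t <= 0 -> `|expR s - expR t| <= `|s - t|.
Proof.
wlog ts : s t / t <= s => [W hs ht|hs ht].
  case: (leP t s) => h; first exact: W.
  by rewrite distrC [`|s - t|]distrC; apply: W => //; apply: ltW.
have e1 : expR t = expR s * expR (t - s) by rewrite -expRD addrC subrK.
have e2 := expR_ge1Dx (t - s).
have e3 : expR s <= 1 by rewrite expR_le1.
have e4 : expR (t - s) <= 1 by rewrite expR_le1 subr_le0.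
have e5 := expR_ge0 s.
rewrite !ger0_norm ?subr_ge0 //; last by rewrite ler_expR.
rewrite e1; nra.
Qed.

Lemma softmax_lip (K : nat) (hK : (0 < K)%N) (a b : 'I_K -> R) (d L : R) :
  (forall i, 0 < a i) -> (forall i, 0 < b i) -> (forall i, `|a i - b i| <= d) ->
  0 < L -> L <= \sum_(j < K) a j ->
  \sum_(i < K) `|a i / (\sum_(j < K) a j) - b i / (\sum_(j < K) b j)|
    <= 2 * K%:R * d / L.
Proof.
move=> ha hb hd hL hLA.
set A := \sum_(j < K) a j; set B := \sum_(j < K) b j.
have A0 : 0 < A by apply: lt_le_trans hLA.
have B0 : 0 < B.
  rewrite /B (bigD1 (Ordinal hK)) //=.
  have := hb (Ordinal hK).
  have : 0 <= \sum_(i < K | i != Ordinal hK) b i by apply: sumr_ge0 => i _; apply: ltW.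
  lra.
have d0 : 0 <= d by apply: le_trans (hd (Ordinal hK)).
have hBA : `|B - A| <= K%:R * d.
  rewrite /A /B -sumrB; apply: (le_trans (ler_norm_sum _ _ _)).
  apply: (@le_trans _ _ (\sum_(i < K) d)).
    by apply: ler_sum => i _; rewrite distrC.
  by rewrite sumr_const card_ord mulr_natl.
apply: (@le_trans _ _ (\sum_(i < K) (d / A + b i * (K%:R * d) / (A * B)))).
  apply: ler_sum => i _.
  have -> : a i / A - b i / B = (a i - b i) / A + b i * (B - A) / (A * B).
    by field; apply/andP; split; rewrite gt_eqF.
  apply: (le_trans (ler_normD _ _)); apply: lerD.
    rewrite normrM normfV (gtr0_norm A0) ler_pM2r ?invr_gt0 //.
  rewrite !normrM normfV (gtr0_norm (mulr_gt0 A0 B0)) (gtr0_norm (hb i)).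
  by rewrite ler_pM2r ?invr_gt0 ?mulr_gt0 // ler_pM2l.
rewrite big_split /= sumr_const card_ord -!mulr_suml -/B.
have -> : d / A *+ K + B * (K%:R * d) / (A * B) = (2 * K%:R * d) * A^-1.
  by rewrite -mulr_natl; field; apply/andP; split; rewrite gt_eqF.
by rewrite ler_wpM2l ?mulr_ge0 // lef_pV2 ?posrE.
Qed.

Lemma inX_le1 (D : nat) (w : 'rV[R]_D) :
  (forall i, w 0 i ^+ 2 <= (1 / Num.sqrt (D%:R)) ^+ 2) -> norm2 w <= 1.
Proof.
move=> H; rewrite /norm2 -sqrtr1 ler_sqrt //.
case: D w H => [|D] w H; first by rewrite big_ord0.
apply: (le_trans (ler_sum _ (fun i _ => H i))).
rewrite sumr_const card_ord expr_div_n expr1n sqr_sqrtr ?ler0n //.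
by rewrite -[_ *+ _]mulr_natr ?mul1r mulVf // pnatr_eq0.
Qed.

Lemma inX_diff (D : nat) (u v : 'rV[R]_D) : inX u -> inX v -> norm2 (u - v) <= 1.
Proof.
move=> hu hv; apply: inX_le1 => i; rewrite !mxE.
have /andP[h1 h2] := hu i; have /andP[h3 h4] := hv i.
nra.
Qed.

Lemma inX_norm (D : nat) (u : 'rV[R]_D) : inX u -> norm2 u <= 1.
Proof.
move=> hu; apply: inX_le1 => i.
have /andP[h1 h2] := hu i.
nra.
Qed.

End M.
Arguments expR_lip {R}.

Theorem lemma2 (R : realType) (D K : nat) (hK : (0 < K)%N)
  (xi : 'I_K -> 'rV[R]_D) (beta : R) (hbeta : 0 < beta)
  (hxi : forall mu, inX (xi mu)) (x z : 'rV[R]_D) (hx : inX x) (hz : inX z) :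
  norm2 (gradE xi beta x - gradE xi beta z)
    <= (1 + 2 * K%:R * beta * expR (beta / 2)) * norm2 (x - z).
Proof.
set p := fun mu => expR (- (beta / 2) * norm2 (x - xi mu) ^+ 2).
set q := fun mu => expR (- (beta / 2) * norm2 (z - xi mu) ^+ 2).
set e := norm2 (x - z).
have e0 : 0 <= e by apply: norm2_ge0.
have Eg : gradE xi beta x - gradE xi beta z =
   (x - z) - \sum_(mu < K) (p mu / \sum_(nu < K) p nu - q mu / \sum_(nu < K) q nu) *: xi mu.
  rewrite /gradE helper; congr (_ - _); rewrite -sumrB.
  by apply: eq_bigr => i _; rewrite scalerBl.
have S1 : \sum_(mu < K) `|p mu / \sum_(nu < K) p nu - q mu / \sum_(nu < K) q nu|
    <= 2 * K%:R * (beta * e) / expR (- (beta / 2)).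
  apply: softmax_lip => //.
  - by move=> i; apply: expR_gt0.
  - by move=> i; apply: expR_gt0.
  - move=> i; rewrite /p /q.
    set m := norm2 (x - xi i); set n := norm2 (z - xi i).
    have m0 : 0 <= m by apply: norm2_ge0.
    have n0 : 0 <= n by apply: norm2_ge0.
    have m1 : m <= 1 by apply: inX_diff.
    have n1 : n <= 1 by apply: inX_diff.
    have h1 : m <= e + n.
      by rewrite /m -(subrK z x) -addrA; apply: norm2_triangle.
    have h2 : n <= e + m.
      have -> : e = norm2 (z - x) by rewrite /e -norm2_opp opprB.
      have -> : n = norm2 ((z - x) + (x - xi i)) by rewrite /n addrA subrK.
      exact: norm2_triangle.
    apply: (le_trans (expR_lip _ _ _ _)).
    + by rewrite mulNr oppr_le0 mulr_ge0 ?sqr_ge0 // divr_ge0 // ltW.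
    + by rewrite mulNr oppr_le0 mulr_ge0 ?sqr_ge0 // divr_ge0 // ltW.
    have k1 : 0 <= beta * (e + n - m) * (m + n) by apply: mulr_ge0; [apply: mulr_ge0|]; lra.
    have k2 : 0 <= beta * (e + m - n) * (m + n) by apply: mulr_ge0; [apply: mulr_ge0|]; lra.
    have k3 : 0 <= beta * e * (2 - (m + n)) by apply: mulr_ge0; [apply: mulr_ge0|]; lra.
    rewrite ler_norml; apply/andP; split; nra.
  - by rewrite expR_gt0.
  - have i0 := Ordinal hK.
    rewrite (bigD1 i0) //=.
    have : 0 <= \sum_(i < K | i != i0) p i by apply: sumr_ge0 => i _; apply: expR_ge0.
    suff : expR (- (beta / 2)) <= p i0 by lra.
    rewrite /p ler_expR !mulNr lerN2; apply: ler_piMr.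
      by rewrite divr_ge0 // ltW.
    rewrite expr_le1 ?norm2_ge0 //; exact: inX_diff.
rewrite Eg.
apply: (le_trans (norm2_triangle _ _)); rewrite norm2_opp -/e.
apply: (@le_trans _ _ (e + 2 * K%:R * (beta * e) / expR (- (beta / 2)))); last first.
  rewrite expRN invrK; rewrite le_eqVlt; apply/orP; left; apply/eqP; ring.
rewrite lerD2l; apply: le_trans S1.
apply: (le_trans (norm2_sum _)); apply: ler_sum => i _.
rewrite norm2_scale ler_piMr //; exact: inX_norm.
Qed.
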